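(* Let $E$ be a locally complete lcHs over $\mathbb{K}$, let $G\subset E'$ be a linear subspace that determines boundedness, and let $\mathcal{F}(\Omega)$ and $\mathcal{F}(\Omega,E)$ be $\varepsilon$-into-compatible. Let $(T^{E},T^{\mathbb{K}})$ be a consistent and strong family for $(\mathcal{F},E)$, let $\nu\colon\omega\to(0,\infty)$ be a weight, and suppose that $\mathcal{F}\nu(\Omega)$ is a Banach space whose closed unit ball $B_{\mathcal{F}\nu}$ is a compact subset of $\mathcal{F}(\Omega)$. Let $U\subset\omega$ be a set of uniqueness for $(T^{\mathbb{K}},\mathcal{F}\nu)$. Then for every $f\in\mathcal{F}\nu_{G}(U,E)$ there exists $F\in\mathcal{F}_{\varepsilon}\nu(\Omega,E)$ with $T^{E}(F)(x)=f(x)$ for all $x\in U$. In other words, the (well-defined, injective) restriction map $R_{U,G}\colon \mathcal{F}_{\varepsilon}\nu(\Omega,E)\to\mathcal{F}\nu_{G}(U,E)$, $F\mapsto (T^{E}(F)(x))_{x\in U}$, is surjective.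
   Context: $\mathbb{K}\in\{\mathbb{R},\mathbb{C}\}$; ''lcHs'' means locally convex Hausdorff space over $\mathbb{K}$; $E$ carries a directed fundamental system of seminorms $(p_\alpha)_{\alpha\in\mathfrak{A}}$ and $E'$ is its dual. $E$ is locally complete if for every closed bounded absolutely convex $D\subset E$ the space $\bigcup_n nD$ normed by the gauge of $D$ is a Banach space. A linear subspace $G\subset E'$ determines boundedness if every $\sigma(E,G)$-bounded subset of $E$ is bounded in $E$. Framework: Let $\Omega,\omega$ be non-empty sets. For an lcHs $F$, $F'_\kappa$ is $F'$ with the topology of uniform convergence on absolutely convex compact subsets of $F$, and $F\varepsilon E:=L_e(F'_\kappa,E)$ is the space of continuous linear maps $F'_\kappa\to E$ with the topology of uniform convergence on equicontinuous subsets of $F'$. Let $\mathcal{F}(\Omega)\subset\mathbb{K}^\Omega$ and $\mathcal{F}(\Omega,E)\subset E^\Omega$ be linear subspaces carrying locally convex Hausdorff topologies with $\delta_x\in\mathcal{F}(\Omega)'$ for all $x\in\Omega$. Define $S\colon\mathcal{F}(\Omega)\varepsilon E\to E^\Omega$, $S(u)(x):=u(\delta_x)$. The spaces are $\varepsilon$-into-compatible if $S$ maps into $\mathcal{F}(\Omega,E)$ and is a linear topological isomorphism onto its range. Let $T^{\mathbb{K}}\colon\mathcal{F}(\Omega)\to\mathbb{K}^\omega$ and $T^{E}\colon\mathcal{F}(\Omega,E)\to E^\omega$ be linear and $T^{\mathbb{K}}_x:=\delta_x\circ T^{\mathbb{K}}$. $(T^E,T^{\mathbb{K}})$ is consistent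 for $(\mathcal{F},E)$ if for every $u\in\mathcal{F}(\Omega)\varepsilon E$ we have $S(u)\in\mathcal{F}(\Omega,E)$ and for all $x\in\omega$: $T^{\mathbb{K}}_x\in\mathcal{F}(\Omega)'$ and $T^{E}(S(u))(x)=u(T^{\mathbb{K}}_x)$. It is strong for $(\mathcal{F},E)$ if for all $e'\in E'$, $f\in\mathcal{F}(\Omega,E)$: $e'\circ f\in\mathcal{F}(\Omega)$ and $T^{\mathbb{K}}(e'\circ f)(x)=e'(T^E(f)(x))$ for all $x\in\omega$. For a weight $\nu\colon\omega\to(0,\infty)$ set $\mathcal{F}\nu(\Omega,E):=\{f\in\mathcal{F}(\Omega,E): |f|_\alpha:=\sup_{x\in\omega}p_\alpha(T^E(f)(x))\nu(x)<\infty\ \forall\alpha\}$ with the topology of these seminorms, and $\mathcal{F}\nu(\Omega):=\{f\in\mathcal{F}(\Omega): |f|_{\mathcal{F}\nu}:=\sup_{x\in\omega}|T^{\mathbb{K}}(f)(x)|\nu(x)<\infty\}$. Let $B_{\mathcal{F}\nu}$ be the closed unit ball of $\mathcal{F}\nu(\Omega)$, $B^{\circ\mathcal{F}'}_{\mathcal{F}\nu}:=\{y'\in\mathcal{F}(\Omega)':|y'(f)|\le1\ \forall f\in B_{\mathcal{F}\nu}\}$ and $\mathcal{F}_\varepsilon\nu(\Omega,E):=S(\{u\in\mathcal{F}(\Omega)\varepsilon E: u(B^{\circ\mathcal{F}'}_{\mathcal{F}\nu})\text{ is bounded in }E\})$. A set $U\subset\omega$ is a set of uniqueness for $(T^{\mathbb{K}},\mathcal{F}\nu)$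 if every $f\in\mathcal{F}\nu(\Omega)$ with $T^{\mathbb{K}}(f)(x)=0$ for all $x\in U$ is $0$. For a separating subspace $G\subset E'$, $\mathcal{F}\nu_G(U,E)$ is the space of functions $f\colon U\to E$ such that for every $e'\in G$ there is $f_{e'}\in\mathcal{F}\nu(\Omega)$ with $T^{\mathbb{K}}(f_{e'})(x)=e'(f(x))$ for all $x\in U$. *)

(* Defs.v *)
From Stdlib Require Import Reals List FunctionalExtensionality.
Set Implicit Arguments.
Open Scope R_scope.

Record Cplx := mkC { Cre : R; Cim : R }.
Definition Cadd (z w : Cplx) := mkC (Cre z + Cre w) (Cim z + Cim w).
Definition Cmul (z w : Cplx) :=
  mkC (Cre z * Cre w - Cim z * Cim w) (Cre z * Cim w + Cim z * Cre w).
Definition Copp (z : Cplx) := mkC (- Cre z) (- Cim z).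
Definition Cmod (z : Cplx) := sqrt (Cre z * Cre z + Cim z * Cim z).

Inductive scalar_field := RealField | ComplexField.

Definition K (k : scalar_field) : Type :=
  match k with RealField => R | ComplexField => Cplx end.

Definition Kadd (k : scalar_field) : K k -> K k -> K k :=
  match k return K k -> K k -> K k with RealField => Rplus | ComplexField => Cadd end.
Definition Kmul (k : scalar_field) : K k -> K k -> K k :=
  match k return K k -> K k -> K k with RealField => Rmult | ComplexField => Cmul end.
Definition Kopp (k : scalar_field) : K k -> K k :=
  match k return K k -> K k with RealField => Ropp | ComplexField => Copp end.
Definition K0 (k : scalar_field) : K k :=
  match k return K k with RealField => 0 | ComplexField => mkC 0 0 end.
Definition K1 (k : scalar_field) : K k :=
  match k return K k with RealField => 1 | ComplexField => mkC 1 0 end.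
Definition Kabs (k : scalar_field) : K k -> R :=
  match k return K k -> R with RealField => Rabs | ComplexField => Cmod end.
Definition KofR (k : scalar_field) : R -> K k :=
  match k return R -> K k with RealField => fun r => r | ComplexField => fun r => mkC r 0 end.

Lemma Kadd_assoc k (a b c : K k) : Kadd k a (Kadd k b c) = Kadd k (Kadd k a b) c.
Proof. destruct k; simpl in *; [ring | destruct a, b, c; unfold Cadd; simpl; f_equal; ring]. Qed.
Lemma Kadd_comm k (a b : K k) : Kadd k a b = Kadd k b a.
Proof. destruct k; simpl in *; [ring | destruct a, b; unfold Cadd; simpl; f_equal; ring]. Qed.
Lemma Kadd_0 k (a : K k) : Kadd k a (K0 k) = a.
Proof. destruct k; simpl in *; [ring | destruct a; unfold Cadd; simpl; f_equal; ring]. Qed.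
Lemma Kadd_opp k (a : K k) : Kadd k a (Kopp k a) = K0 k.
Proof. destruct k; simpl in *; [ring | destruct a; unfold Cadd, Copp; simpl; f_equal; ring]. Qed.
Lemma Kmul_1 k (a : K k) : Kmul k (K1 k) a = a.
Proof. destruct k; simpl in *; [ring | destruct a; unfold Cmul; simpl; f_equal; ring]. Qed.
Lemma Kmul_assoc k (a b c : K k) : Kmul k a (Kmul k b c) = Kmul k (Kmul k a b) c.
Proof. destruct k; simpl in *; [ring | destruct a, b, c; unfold Cmul; simpl; f_equal; ring]. Qed.
Lemma Kmul_addr k (a b c : K k) : Kmul k a (Kadd k b c) = Kadd k (Kmul k a b) (Kmul k a c).
Proof. destruct k; simpl in *; [ring | destruct a, b, c; unfold Cmul, Cadd; simpl; f_equal; ring]. Qed.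
Lemma Kmul_addl k (a b c : K k) : Kmul k (Kadd k a b) c = Kadd k (Kmul k a c) (Kmul k b c).
Proof. destruct k; simpl in *; [ring | destruct a, b, c; unfold Cmul, Cadd; simpl; f_equal; ring]. Qed.

Record VSpace (k : scalar_field) := {
  vcar :> Type;
  vadd : vcar -> vcar -> vcar;
  vzero : vcar;
  vopp : vcar -> vcar;
  vscal : K k -> vcar -> vcar;
  vaddA : forall x y z, vadd x (vadd y z) = vadd (vadd x y) z;
  vaddC : forall x y, vadd x y = vadd y x;
  vadd0 : forall x, vadd x vzero = x;
  vaddN : forall x, vadd x (vopp x) = vzero;
  vscal1 : forall x, vscal (K1 k) x = x;
  vscalA : forall a b x, vscal a (vscal b x) = vscal (Kmul k a b) x;
  vscalDr : forall a x y, vscal a (vadd x y) = vadd (vscal a x) (vscal a y);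
  vscalDl : forall a b x, vscal (Kadd k a b) x = vadd (vscal a x) (vscal b x) }.

Arguments vadd {k V} : rename.
Arguments vzero {k} V : rename.
Arguments vopp {k V} : rename.
Arguments vscal {k V} : rename.

Definition vsub k (V : VSpace k) (x y : V) : V := vadd x (vopp y).
Definition lcomb k (V : VSpace k) (a : K k) (x : V) (b : K k) (y : V) : V :=
  vadd (vscal a x) (vscal b y).

Definition Kvs (k : scalar_field) : VSpace k :=
  @Build_VSpace k (K k) (Kadd k) (K0 k) (Kopp k) (Kmul k)
    (@Kadd_assoc k) (@Kadd_comm k) (@Kadd_0 k) (@Kadd_opp k)
    (@Kmul_1 k) (@Kmul_assoc k) (@Kmul_addr k) (@Kmul_addl k).

Section FunVS.
Variables (k : scalar_field) (X : Type) (V : VSpace k).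
Definition fadd (f g : X -> V) : X -> V := fun x => vadd (f x) (g x).
Definition fzero : X -> V := fun _ => vzero V.
Definition fopp (f : X -> V) : X -> V := fun x => vopp (f x).
Definition fscal (a : K k) (f : X -> V) : X -> V := fun x => vscal a (f x).
Lemma faddA f g h : fadd f (fadd g h) = fadd (fadd f g) h.
Proof. apply functional_extensionality; intro; apply vaddA. Qed.
Lemma faddC f g : fadd f g = fadd g f.
Proof. apply functional_extensionality; intro; apply vaddC. Qed.
Lemma fadd0 f : fadd f fzero = f.
Proof. apply functional_extensionality; intro; apply vadd0. Qed.
Lemma faddN f : fadd f (fopp f) = fzero.
Proof. apply functional_extensionality; intro; apply vaddN. Qed.
Lemma fscal1 f : fscal (K1 k) f = f.
Proof. apply functional_extensionality; intro; apply vscal1. Qed.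
Lemma fscalA a b f : fscal a (fscal b f) = fscal (Kmul k a b) f.
Proof. apply functional_extensionality; intro; apply vscalA. Qed.
Lemma fscalDr a f g : fscal a (fadd f g) = fadd (fscal a f) (fscal a g).
Proof. apply functional_extensionality; intro; apply vscalDr. Qed.
Lemma fscalDl a b f : fscal (Kadd k a b) f = fadd (fscal a f) (fscal b f).
Proof. apply functional_extensionality; intro; apply vscalDl. Qed.
Definition fun_vs : VSpace k :=
  @Build_VSpace k (X -> V) fadd fzero fopp fscal
    faddA faddC fadd0 faddN fscal1 fscalA fscalDr fscalDl.
End FunVS.

(** * Locally convex Hausdorff topologies given by a directed fundamental
    system of seminorms, on a linear subspace of a vector space. *)

Record lc_subspace k (V : VSpace k) := {
  ls_mem : V -> Prop;
  ls_idx : Type;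
  ls_sn : ls_idx -> V -> R;
  ls_zero : ls_mem (vzero V);
  ls_add : forall x y, ls_mem x -> ls_mem y -> ls_mem (vadd x y);
  ls_scal : forall a x, ls_mem x -> ls_mem (vscal a x);
  ls_tri : forall i x y, ls_mem x -> ls_mem y ->
             ls_sn i (vadd x y) <= ls_sn i x + ls_sn i y;
  ls_hom : forall i a x, ls_mem x -> ls_sn i (vscal a x) = Kabs k a * ls_sn i x;
  ls_dir : forall i j, exists l C, forall x, ls_mem x ->
             ls_sn i x <= C * ls_sn l x /\ ls_sn j x <= C * ls_sn l x;
  ls_haus : forall x, ls_mem x -> (forall i, ls_sn i x = 0) -> x = vzero V }.

Record lcHs k := {
  lcs_vs :> VSpace k;
  lcs_top :> lc_subspace lcs_vs;
  lcs_full : forall x, ls_mem lcs_top x }.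

Section Notions.
Variables (k : scalar_field) (V : VSpace k) (X : lc_subspace V).

Definition is_linear_on (y : V -> K k) : Prop :=
  forall a x b z, ls_mem X x -> ls_mem X z ->
    y (lcomb V a x b z) = Kadd k (Kmul k a (y x)) (Kmul k b (y z)).

Definition is_dual (y : V -> K k) : Prop :=
  is_linear_on y /\
  exists i C, forall x, ls_mem X x -> Kabs k (y x) <= C * ls_sn X i x.

Definition is_open (O : V -> Prop) : Prop :=
  forall x, ls_mem X x -> O x ->
    exists i eps, 0 < eps /\
      forall z, ls_mem X z -> ls_sn X i (vsub V z x) < eps -> O z.

Definition is_closed (D : V -> Prop) : Prop :=
  (forall x, D x -> ls_mem X x) /\
  forall x, ls_mem X x -> ~ D x ->
    exists i eps, 0 < eps /\
      forall z, ls_mem X z -> ls_sn X i (vsub V z x) < eps -> ~ D z.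

Definition is_compact (C : V -> Prop) : Prop :=
  (forall x, C x -> ls_mem X x) /\
  forall (I : Type) (O : I -> V -> Prop),
    (forall i, is_open (O i)) ->
    (forall x, C x -> exists i, O i x) ->
    exists l : list I, forall x, C x -> exists i, In i l /\ O i x.

Definition abs_convex (C : V -> Prop) : Prop :=
  forall x z a b, C x -> C z -> Kabs k a + Kabs k b <= 1 -> C (lcomb V a x b z).

Definition is_bounded (B : V -> Prop) : Prop :=
  forall i, exists C, forall x, B x -> ls_sn X i x <= C.

Definition equicontinuous (M : (V -> K k) -> Prop) : Prop :=
  (forall y, M y -> is_dual y) /\
  exists i C, forall y, M y -> forall x, ls_mem X x -> Kabs k (y x) <= C * ls_sn X i x.
End Notions.
Arguments abs_convex {k V} C.

Section LocComplete.
Variables (k : scalar_field) (E : lcHs k).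

Definition in_mult (D : E -> Prop) (t : R) (x : E) : Prop :=
  exists d, D d /\ x = vscal (KofR k t) d.
Definition in_span (D : E -> Prop) (x : E) : Prop :=
  exists n : nat, in_mult D (INR n) x.

Definition locally_complete : Prop :=
  forall D : E -> Prop,
    is_closed E D -> is_bounded E D -> abs_convex D ->
    forall xs : nat -> E,
      (forall n, in_span D (xs n)) ->
      (forall eps, 0 < eps -> exists N, forall n m, (N <= n)%nat -> (N <= m)%nat ->
          in_mult D eps (vsub E (xs n) (xs m))) ->
      exists x, in_span D x /\
        forall eps, 0 < eps -> exists N, forall n, (N <= n)%nat ->
          in_mult D eps (vsub E (xs n) x).

Definition determines_boundedness (G : (E -> K k) -> Prop) : Prop :=
  (forall g, G g -> is_dual E g) /\
  G (fun _ => K0 k) /\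
  (forall a g b h, G g -> G h -> G (fun x => Kadd k (Kmul k a (g x)) (Kmul k b (h x)))) /\
  forall B : E -> Prop,
    (forall g, G g -> exists C, forall x, B x -> Kabs k (g x) <= C) ->
    is_bounded E B.
End LocComplete.

Section Eps.
Variables (k : scalar_field) (Om om : Type) (E : lcHs k).
Notation FunK := (fun_vs Om (Kvs k)).
Notation FunE := (fun_vs Om E).
Variables (FO : lc_subspace FunK) (FOE : lc_subspace FunE).

(** u : F(Om)'_kappa -> E is in F(Om) eps E (continuous linear maps) *)
Definition in_eps (u : ((Om -> K k) -> K k) -> E) : Prop :=
  (forall y1 y2 a b, is_dual FO y1 -> is_dual FO y2 ->
     u (fun f => Kadd k (Kmul k a (y1 f)) (Kmul k b (y2 f)))
       = lcomb E a (u y1) b (u y2)) /\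
  forall i : ls_idx E, exists (Kset : (Om -> K k) -> Prop) (C : R),
    abs_convex (V:=FunK) Kset /\ is_compact FO Kset /\ 0 <= C /\
    forall y, is_dual FO y ->
      forall s, 0 <= s -> (forall f, Kset f -> Kabs k (y f) <= s) ->
        ls_sn E i (u y) <= C * s.

Definition Smap (u : ((Om -> K k) -> K k) -> E) : Om -> E :=
  fun x => u (fun f => f x).

Definition eps_into_compatible : Prop :=
  (forall x : Om, is_dual FO (fun f => f x)) /\
  (forall u, in_eps u -> ls_mem FOE (Smap u)) /\
  (forall u1 u2, in_eps u1 -> in_eps u2 -> Smap u1 = Smap u2 ->
     forall y, is_dual FO y -> u1 y = u2 y) /\
  (forall g : ls_idx FOE, exists M (i : ls_idx E) C,
     equicontinuous FO M /\ 0 <= C /\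
     forall u, in_eps u -> forall s, 0 <= s -> (forall y, M y -> ls_sn E i (u y) <= s) ->
       ls_sn FOE g (Smap u) <= C * s) /\
  (forall M (i : ls_idx E), equicontinuous FO M ->
     exists (g : ls_idx FOE) C, forall u, in_eps u -> forall y, M y ->
       ls_sn E i (u y) <= C * ls_sn FOE g (Smap u)).

Variables (TE : (Om -> E) -> om -> E) (TK : (Om -> K k) -> om -> K k).

Definition T_linear : Prop :=
  (forall a f b g, ls_mem FO f -> ls_mem FO g ->
     TK (lcomb FunK a f b g) = lcomb (fun_vs om (Kvs k)) a (TK f) b (TK g)) /\
  (forall a f b g, ls_mem FOE f -> ls_mem FOE g ->
     TE (lcomb FunE a f b g) = lcomb (fun_vs om E) a (TE f) b (TE g)).

Definition consistent : Prop :=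
  forall u, in_eps u ->
    ls_mem FOE (Smap u) /\
    forall x : om, is_dual FO (fun f => TK f x) /\ TE (Smap u) x = u (fun f => TK f x).

Definition strong : Prop :=
  forall e' : E -> K k, is_dual E e' -> forall f : Om -> E, ls_mem FOE f ->
    ls_mem FO (fun w => e' (f w)) /\
    forall x : om, TK (fun w => e' (f w)) x = e' (TE f x).

Variable nu : om -> R.

Definition Fnu (f : Om -> K k) : Prop :=
  ls_mem FO f /\ exists C, forall x, Kabs k (TK f x) * nu x <= C.

Definition Bnu (f : Om -> K k) : Prop :=
  Fnu f /\ forall x, Kabs k (TK f x) * nu x <= 1.

Definition Fnu_Banach : Prop :=
  (forall f, Fnu f -> (forall x, TK f x = K0 k) -> f = fun _ => K0 k) /\
  forall fs : nat -> Om -> K k, (forall n, Fnu (fs n)) ->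
    (forall eps, 0 < eps -> exists N, forall n m, (N <= n)%nat -> (N <= m)%nat ->
       forall x, Kabs k (TK (vsub FunK (fs n) (fs m)) x) * nu x <= eps) ->
    exists f, Fnu f /\
      forall eps, 0 < eps -> exists N, forall n, (N <= n)%nat ->
        forall x, Kabs k (TK (vsub FunK (fs n) f) x) * nu x <= eps.

Definition Bnu_polar (y : (Om -> K k) -> K k) : Prop :=
  is_dual FO y /\ forall f, Bnu f -> Kabs k (y f) <= 1.

Definition Feps_nu (F : Om -> E) : Prop :=
  exists u, in_eps u /\ F = Smap u /\
    is_bounded E (fun e => exists y, Bnu_polar y /\ e = u y).

Definition set_of_uniqueness (U : om -> Prop) : Prop :=
  forall f, Fnu f -> (forall x, U x -> TK f x = K0 k) -> f = fun _ => K0 k.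

Definition FnuG (G : (E -> K k) -> Prop) (U : om -> Prop) (f : om -> E) : Prop :=
  forall e', G e' -> exists fe, Fnu fe /\ forall x, U x -> TK fe x = e' (f x).
End Eps.

(* Main.v *)
Require Import Defs.
From Stdlib Require Import Reals Lra Lia Psatz ZArith List FunctionalExtensionality ClassicalEpsilon Classical.
Open Scope R_scope.

Ltac kdes := repeat match goal with c : Cplx |- _ => destruct c end.
Ltac ksolve k := destruct k; simpl in *;
  [ ring | kdes; unfold Cadd, Cmul, Copp in *; simpl in *; f_equal; ring ].

Definition KRe (k : scalar_field) : K k -> R :=
  match k return K k -> R with RealField => fun r => r | ComplexField => Cre end.

Lemma Kmul_comm k (a b : K k) : Kmul k a b = Kmul k b a.
Proof. ksolve k. Qed.
Lemma Kmul_0l k (a : K k) : Kmul k (K0 k) a = K0 k.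
Proof. ksolve k. Qed.
Lemma Kmul_0r k (a : K k) : Kmul k a (K0 k) = K0 k.
Proof. ksolve k. Qed.
Lemma Kmul_1r k (a : K k) : Kmul k a (K1 k) = a.
Proof. ksolve k. Qed.
Lemma Kadd_0l k (a : K k) : Kadd k (K0 k) a = a.
Proof. ksolve k. Qed.
Lemma Kopp_mul k (a : K k) : Kopp k a = Kmul k (Kopp k (K1 k)) a.
Proof. ksolve k. Qed.
Lemma KofR_add k r s : KofR k (r + s) = Kadd k (KofR k r) (KofR k s).
Proof. ksolve k. Qed.
Lemma KofR_mul k r s : KofR k (r * s) = Kmul k (KofR k r) (KofR k s).
Proof. ksolve k. Qed.
Lemma KofR_1 k : KofR k 1 = K1 k.
Proof. destruct k; reflexivity. Qed.
Lemma KofR_0 k : KofR k 0 = K0 k.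
Proof. destruct k; reflexivity. Qed.
Lemma KofR_opp1 k : KofR k (-1) = Kopp k (K1 k).
Proof. ksolve k. Qed.

Lemma sq_nonneg x : 0 <= x*x.
Proof. apply Rle_0_sqr. Qed.

Lemma sqrt_sq_le a b : a <= sqrt (a*a + b*b).
Proof.
  destruct (Rle_or_lt a 0). { pose proof (sqrt_pos (a*a+b*b)); lra. }
  rewrite <- (sqrt_square a) at 1 by lra. apply sqrt_le_1_alt. nra.
Qed.

Lemma Kabs_ge0 k (a : K k) : 0 <= Kabs k a.
Proof. destruct k; simpl. apply Rabs_pos. apply sqrt_pos. Qed.

Lemma Kabs_mul k (a b : K k) : Kabs k (Kmul k a b) = Kabs k a * Kabs k b.
Proof. destruct k; simpl in *. apply Rabs_mult. kdes; unfold Cmod, Cmul; simpl.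
  rewrite <- sqrt_mult by nra. f_equal. ring. Qed.

Lemma Kabs_add k (a b : K k) : Kabs k (Kadd k a b) <= Kabs k a + Kabs k b.
Proof. destruct k; simpl in *. apply Rabs_triang. destruct a as [a1 b1], b as [c d]; rename a1 into a, b1 into b; unfold Cmod, Cadd; simpl.
  pose proof (sqrt_pos (a*a+b*b)). pose proof (sqrt_pos (c*c+d*d)).
  apply Rsqr_incr_0_var. 2: lra. unfold Rsqr.
  rewrite sqrt_sqrt by (pose proof (sq_nonneg (a+c)); pose proof (sq_nonneg (b+d)); lra).
  replace ((sqrt (a * a + b * b) + sqrt (c * c + d * d)) * (sqrt (a * a + b * b) + sqrt (c * c + d * d)))
    with (sqrt (a * a + b * b) * sqrt (a * a + b * b) + sqrt (c * c + d * d) * sqrt (c * c + d * d)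
          + 2 * (sqrt (a * a + b * b) * sqrt (c * c + d * d))) by ring.
  pose proof (sq_nonneg a); pose proof (sq_nonneg b); pose proof (sq_nonneg c); pose proof (sq_nonneg d).
  rewrite !sqrt_sqrt by lra. rewrite <- sqrt_mult by lra.
  pose proof (sqrt_sq_le (a*c+b*d) (a*d - b*c)) as HC.
  replace ((a * c + b * d) * (a * c + b * d) + (a * d - b * c) * (a * d - b * c))
    with ((a * a + b * b) * (c * c + d * d)) in HC by ring.
  replace ((a + c) * (a + c) + (b + d) * (b + d)) with (a*a+b*b + (c*c+d*d) + 2*(a*c+b*d)) by ring.
  lra.
Qed.

Lemma Kabs_KofR k r : Kabs k (KofR k r) = Rabs r.
Proof. destruct k; simpl. reflexivity. unfold Cmod; simpl.
  replace (r*r+0*0) with (Rsqr r) by (unfold Rsqr; ring). apply sqrt_Rsqr_abs. Qed.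

Lemma Kabs_0 k : Kabs k (K0 k) = 0.
Proof. rewrite <- KofR_0, Kabs_KofR. apply Rabs_R0. Qed.
Lemma Kabs_1 k : Kabs k (K1 k) = 1.
Proof. rewrite <- KofR_1, Kabs_KofR. apply Rabs_R1. Qed.
Lemma Kabs_m1 k : Kabs k (Kopp k (K1 k)) = 1.
Proof. rewrite <- KofR_opp1, Kabs_KofR. unfold Rabs; destruct Rcase_abs; lra. Qed.
Lemma Kabs_opp k a : Kabs k (Kopp k a) = Kabs k a.
Proof. rewrite Kopp_mul, Kabs_mul, Kabs_m1. ring. Qed.

Lemma KRe_add k (a b : K k) : KRe k (Kadd k a b) = KRe k a + KRe k b.
Proof. destruct k; simpl in *; [reflexivity| kdes; reflexivity]. Qed.
Lemma KRe_realmul k t (a : K k) : KRe k (Kmul k (KofR k t) a) = t * KRe k a.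
Proof. destruct k; simpl in *; [reflexivity| kdes; simpl; ring]. Qed.
Lemma KRe_opp k (a : K k) : KRe k (Kopp k a) = - KRe k a.
Proof. destruct k; simpl in *; [reflexivity| kdes; reflexivity]. Qed.
Lemma KRe_0 k : KRe k (K0 k) = 0.
Proof. destruct k; reflexivity. Qed.
Lemma KRe_le k (a : K k) : KRe k a <= Kabs k a.
Proof. destruct k; simpl in *. apply Rle_abs. kdes; unfold Cmod; simpl. apply sqrt_sq_le. Qed.

Lemma K_rotate k (z : K k) : exists c, Kabs k c = 1 /\ KRe k (Kmul k c z) = Kabs k z.
Proof.
  destruct k; simpl in *.
  - destruct (Rle_or_lt 0 z).
    + exists 1. rewrite Rabs_R1, Rabs_right by lra. split; ring.
    + exists (-1). rewrite (Rabs_left z) by lra. split; [unfold Rabs; destruct Rcase_abs; lra | ring].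
  - destruct z as [a b]. unfold Cmod; simpl.
    set (m := sqrt (a*a+b*b)).
    assert (Hm : 0 <= m) by apply sqrt_pos.
    assert (Hmm : m * m = a*a+b*b) by (apply sqrt_sqrt; nra).
    destruct (Req_dec m 0) as [H0|H0].
    + exists (mkC 1 0). simpl. rewrite H0. split. 2: { assert (a = 0) by nra. subst. ring. }
      replace (1*1+0*0) with 1 by ring. apply sqrt_1.
    + exists (mkC (a/m) (-b/m)). simpl. split.
      * replace (a / m * (a / m) + - b / m * (- b / m)) with 1. apply sqrt_1.
        replace (a / m * (a / m) + - b / m * (- b / m)) with ((a*a+b*b)/(m*m)) by (field; auto).
        rewrite <- Hmm. field. auto.
      * match goal with |- ?l = _ => replace l with ((a*a+b*b)/m) by (field; auto) end.
        rewrite <- Hmm. field. auto.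
Qed.

Lemma K_solve k (z : K k) : z <> K0 k -> forall r, exists t, KRe k (Kmul k t z) = r.
Proof.
  intros Hz r. destruct k; simpl in *.
  - exists (r / z). field. exact Hz.
  - destruct z as [a b]. assert (Hm : a*a+b*b <> 0).
    { intro H. apply Hz. assert (a = 0) by nra. assert (b = 0) by nra. subst; reflexivity. }
    exists (mkC (r*a/(a*a+b*b)) (- r * b/(a*a+b*b))). simpl. field. exact Hm.
Qed.

Arguments Kmul_comm {k}. Arguments Kmul_0l {k}. Arguments Kmul_0r {k}. Arguments Kmul_1r {k}.
Arguments Kadd_0l {k}. Arguments Kopp_mul {k}. Arguments Kabs_ge0 {k}. Arguments Kabs_mul {k}.
Arguments Kabs_add {k}. Arguments Kabs_opp {k}. Arguments KRe_add {k}. Arguments KRe_realmul {k}.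
Arguments KRe_opp {k}. Arguments KRe_le {k}. Arguments K_rotate {k}. Arguments K_solve {k}.

Set Implicit Arguments.
Unset Strict Implicit.

Section VS.
Variables (k : scalar_field) (V : VSpace k).

Lemma vadd0l (x : V) : vadd (vzero V) x = x.
Proof. rewrite vaddC. apply vadd0. Qed.

Lemma vadd_cancel (x y : V) : vadd x y = y -> x = vzero V.
Proof. intro H. rewrite <- (vadd0 _ x), <- (vaddN _ y), vaddA, H. reflexivity. Qed.

Lemma vscal_0 (x : V) : vscal (K0 k) x = vzero V.
Proof. apply vadd_cancel with (y := vscal (K0 k) x). rewrite <- vscalDl. f_equal. apply Kadd_0. Qed.

Lemma vscal_zero a : vscal a (vzero V) = vzero V.
Proof. rewrite <- (vscal_0 (vzero V)), vscalA, Kmul_0r. reflexivity. Qed.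

Lemma vopp_unique (x y : V) : vadd x y = vzero V -> y = vopp x.
Proof. intro H. rewrite <- (vadd0 _ y), <- (vaddN _ x), vaddA, (vaddC _ y x), H, vadd0l. reflexivity. Qed.

Lemma vopp_scal (x : V) : vopp x = vscal (Kopp k (K1 k)) x.
Proof. symmetry. apply vopp_unique. rewrite <- (vscal1 _ x) at 1. rewrite <- vscalDl, Kadd_opp. apply vscal_0. Qed.

Lemma lcomb_0r a (x z : V) : lcomb V a x (K0 k) z = vscal a x.
Proof. unfold lcomb. rewrite vscal_0. apply vadd0. Qed.
End VS.

Arguments vadd0l {k V}. Arguments vscal_0 {k V}. Arguments vscal_zero {k V}.
Arguments vopp_scal {k V}. Arguments lcomb_0r {k V}.

Section LS.
Variables (k : scalar_field) (V : VSpace k) (X : lc_subspace V).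

Lemma ls_opp x : ls_mem X x -> ls_mem X (vopp x).
Proof. intro. rewrite vopp_scal. apply ls_scal; auto. Qed.
Lemma ls_sub x z : ls_mem X x -> ls_mem X z -> ls_mem X (vsub V x z).
Proof. intros. apply ls_add; auto. apply ls_opp; auto. Qed.
Lemma ls_lcomb a x b z : ls_mem X x -> ls_mem X z -> ls_mem X (lcomb V a x b z).
Proof. intros. apply ls_add; apply ls_scal; auto. Qed.

Lemma sn_zero i : ls_sn X i (vzero V) = 0.
Proof. rewrite <- (vscal_0 (vzero V)), ls_hom, Kabs_0 by apply ls_zero. ring. Qed.

Lemma sn_opp i x : ls_mem X x -> ls_sn X i (vopp x) = ls_sn X i x.
Proof. intro. rewrite vopp_scal, ls_hom, Kabs_m1 by auto. ring. Qed.

Lemma sn_ge0 i x : ls_mem X x -> 0 <= ls_sn X i x.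
Proof. intro Hx. pose proof (ls_tri X i x (vopp x) Hx (ls_opp Hx)).
  rewrite vaddN, sn_zero, sn_opp in H by auto. lra. Qed.

Lemma sn_sym i x z : ls_mem X x -> ls_mem X z -> ls_sn X i (vsub V x z) = ls_sn X i (vsub V z x).
Proof. intros. unfold vsub. rewrite <- sn_opp by (apply ls_sub; auto).
  f_equal. symmetry. apply vopp_unique. rewrite vaddA, <- (vaddA _ x), (vaddC _ (vopp z) z), vaddN, vadd0, vaddN.
  reflexivity. Qed.

Lemma sn_scal_real i t x : ls_mem X x -> ls_sn X i (vscal (KofR k t) x) = Rabs t * ls_sn X i x.
Proof. intro. rewrite ls_hom, Kabs_KofR by auto. reflexivity. Qed.

Lemma lin_add y x z : is_linear_on X y -> ls_mem X x -> ls_mem X z ->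
  y (vadd x z) = Kadd k (y x) (y z).
Proof. intros Hy Hx Hz. pose proof (Hy (K1 k) x (K1 k) z Hx Hz). unfold lcomb in H.
  rewrite !vscal1, !Kmul_1 in H. exact H. Qed.

Lemma lin_scal y a x : is_linear_on X y -> ls_mem X x -> y (vscal a x) = Kmul k a (y x).
Proof. intros Hy Hx. pose proof (Hy a x (K0 k) x Hx Hx). rewrite lcomb_0r in H. rewrite H, Kmul_0l, Kadd_0. reflexivity. Qed.

Lemma lin_zero y : is_linear_on X y -> y (vzero V) = K0 k.
Proof. intro Hy. rewrite <- (vscal_0 (vzero V)), lin_scal, Kmul_0l by (auto; apply ls_zero). reflexivity. Qed.

Lemma lin_sub y x z : is_linear_on X y -> ls_mem X x -> ls_mem X z ->
  y (vsub V x z) = Kadd k (y x) (Kopp k (y z)).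
Proof. intros. unfold vsub. rewrite lin_add, vopp_scal, lin_scal, <- Kopp_mul by (auto; apply ls_opp; auto).
  reflexivity. Qed.

Lemma dual_bound y : is_dual X y -> exists i C, 0 <= C /\ forall x, ls_mem X x -> Kabs k (y x) <= C * ls_sn X i x.
Proof. intros [_ [i [C HC]]]. exists i, (Rabs C). split. apply Rabs_pos. intros x Hx.
  eapply Rle_trans. apply HC; auto. apply Rmult_le_compat_r. apply sn_ge0; auto. apply Rle_abs. Qed.

Lemma dual_comb a y1 b y2 : is_dual X y1 -> is_dual X y2 ->
  is_dual X (fun f => Kadd k (Kmul k a (y1 f)) (Kmul k b (y2 f))).
Proof.
  intros H1 H2. split.
  - intros c x d z Hx Hz. rewrite (proj1 H1), (proj1 H2) by auto.
    destruct k; simpl in *; [ring| destruct a, b, c, d, (y1 x), (y1 z), (y2 x), (y2 z); unfold Cadd, Cmul; simpl; f_equal; ring].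
  - destruct (dual_bound H1) as [i [C1 [HC1 B1]]]. destruct (dual_bound H2) as [j [C2 [HC2 B2]]].
    destruct (ls_dir X i j) as [l [D HD]].
    exists l, (Kabs k a * C1 * Rabs D + Kabs k b * C2 * Rabs D). intros x Hx.
    destruct (HD x Hx) as [D1 D2].
    pose proof (sn_ge0 l Hx). pose proof (B1 x Hx). pose proof (B2 x Hx).
    pose proof (Kabs_ge0 a). pose proof (Kabs_ge0 b).
    eapply Rle_trans. apply Kabs_add. rewrite !Kabs_mul.
    assert (ls_sn X i x <= Rabs D * ls_sn X l x).
    { eapply Rle_trans. apply D1. apply Rmult_le_compat_r; auto. apply Rle_abs. }
    assert (ls_sn X j x <= Rabs D * ls_sn X l x).
    { eapply Rle_trans. apply D2. apply Rmult_le_compat_r; auto. apply Rle_abs. }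
    assert (Kabs k (y1 x) <= C1 * (Rabs D * ls_sn X l x)) by (eapply Rle_trans; [apply B1; auto| apply Rmult_le_compat_l; auto]).
    assert (Kabs k (y2 x) <= C2 * (Rabs D * ls_sn X l x)) by (eapply Rle_trans; [apply B2; auto| apply Rmult_le_compat_l; auto]).
    apply Rle_trans with (Kabs k a * (C1 * (Rabs D * ls_sn X l x)) + Kabs k b * (C2 * (Rabs D * ls_sn X l x))).
    + apply Rplus_le_compat; apply Rmult_le_compat_l; auto.
    + right; ring.
Qed.

Lemma dual_cont y : is_dual X y -> exists i C, 0 <= C /\ forall x z, ls_mem X x -> ls_mem X z ->
  Kabs k (Kadd k (y z) (Kopp k (y x))) <= C * ls_sn X i (vsub V z x).
Proof. intros Hy. destruct (dual_bound Hy) as [i [C [HC B]]]. exists i, C. split; auto.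
  intros x z Hx Hz. rewrite <- lin_sub by (auto; apply Hy). apply B. apply ls_sub; auto. Qed.
End LS.

Lemma div_le x d y e : 0 < d -> 0 < e -> x * e <= y * d -> x / d <= y / e.
Proof. intros. replace (x/d) with ((x*e) * /(d*e)) by (field; lra).
  replace (y/e) with ((y*d)*/(d*e)) by (field; lra).
  apply Rmult_le_compat_r; auto. left; apply Rinv_0_lt_compat, Rmult_lt_0_compat; auto. Qed.
Lemma div_le1 x d : 0 < d -> x <= d -> x / d <= 1.
Proof. intros. replace 1 with (d/d) by (field; lra). unfold Rdiv. apply Rmult_le_compat_r; auto. left; apply Rinv_0_lt_compat; auto. Qed.
Lemma le_div_mul l x d : 0 < d -> l <= x / d -> l * d <= x.
Proof. intros. replace x with ((x/d)*d) by (field; lra). apply Rmult_le_compat_r; lra. Qed.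
Lemma div_le_mul l x d : 0 < d -> x / d <= l -> x <= l * d.
Proof. intros. replace x with ((x/d)*d) by (field; lra). apply Rmult_le_compat_r; lra. Qed.

Section KF.
Variables (X : Type) (cc : R -> X -> X -> X).
Definition convex (S : X -> Prop) := forall t p q, 0 <= t <= 1 -> S p -> S q -> S (cc t p q).
Definition affine_on (S : X -> Prop) (g : X -> R) :=
  forall t p q, 0 <= t <= 1 -> S p -> S q -> g (cc t p q) = t * g p + (1 - t) * g q.

Lemma two_key (S : X -> Prop) h1 h2 : convex S -> affine_on S h1 -> affine_on S h2 ->
  (forall x, S x -> h1 x <= 0 \/ h2 x <= 0) ->
  forall p q, S p -> S q -> h1 p > 0 -> h2 q > 0 -> h1 p * h2 q <= h1 q * h2 p.
Proof.
  intros HS A1 A2 H p q Hp Hq P1 Q2.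
  assert (b1 : h2 p <= 0) by (destruct (H p Hp); lra).
  assert (a2 : h1 q <= 0) by (destruct (H q Hq); lra).
  destruct (Rle_lt_dec (h1 p * h2 q) (h1 q * h2 p)) as [|Hc]; auto. exfalso.
  set (a1 := h1 p) in *. set (b2 := h2 q) in *. set (a2' := h1 q) in *. set (b1' := h2 p) in *.
  set (lo := - a2' / (a1 - a2')). set (hi := b2 / (b2 - b1')).
  assert (Hlo : lo * (a1 - a2') = - a2') by (unfold lo; field; lra).
  assert (Hhi : hi * (b2 - b1') = b2) by (unfold hi; field; lra).
  assert (Hlh : lo < hi).
  { unfold lo, hi. apply Rnot_le_lt. intro Hle.
    assert (- a2' * (b2 - b1') >= b2 * (a1 - a2')).
    { apply Rle_ge. apply Rmult_le_reg_r with (/ ((a1 - a2') * (b2 - b1'))).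
      apply Rinv_0_lt_compat, Rmult_lt_0_compat; lra.
      replace (b2 * (a1 - a2') * / ((a1 - a2') * (b2 - b1'))) with (b2 / (b2 - b1')) by (field; lra).
      replace (- a2' * (b2 - b1') * / ((a1 - a2') * (b2 - b1'))) with (- a2' / (a1 - a2')) by (field; lra).
      exact Hle. }
    nra. }
  assert (Hlo0 : 0 <= lo).
  { unfold lo. unfold Rdiv. apply Rmult_le_pos. lra. left; apply Rinv_0_lt_compat; lra. }
  assert (Hhi1 : hi <= 1).
  { apply Rmult_le_reg_r with (b2 - b1'). lra. rewrite Hhi. lra. }
  set (t := (lo + hi) / 2).
  assert (Ht : 0 <= t <= 1) by (unfold t; lra).
  destruct (H (cc t p q)) as [Hx|Hx]. apply HS; auto.
  - rewrite A1 in Hx by auto. fold a1 a2' in Hx.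
    assert (t * (a1 - a2') > lo * (a1 - a2')) by (apply Rmult_gt_compat_r; unfold t in *; lra).
    nra.
  - rewrite A2 in Hx by auto. fold b1' b2 in Hx.
    assert (t * (b2 - b1') < hi * (b2 - b1')) by (apply Rmult_lt_compat_r; unfold t in *; lra).
    nra.
Qed.

Lemma two (S : X -> Prop) h1 h2 : convex S -> affine_on S h1 -> affine_on S h2 ->
  (forall x, S x -> h1 x <= 0 \/ h2 x <= 0) ->
  exists l, 0 <= l <= 1 /\ forall x, S x -> l * h1 x + (1 - l) * h2 x <= 0.
Proof.
  intros HS A1 A2 H.
  destruct (classic (exists p, S p /\ h1 p > 0)) as [[p [Hp P1]]|NP].
  2: { exists 1. split. lra. intros x Hx. assert (h1 x <= 0).
       { apply Rnot_lt_le. intro. apply NP. exists x. split; auto. } lra. }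
  destruct (classic (exists q, S q /\ h2 q > 0)) as [[q [Hq Q2]]|NQ].
  2: { exists 0. split. lra. intros x Hx. assert (h2 x <= 0).
       { apply Rnot_lt_le. intro. apply NQ. exists x. split; auto. } lra. }
  pose proof (two_key HS A1 A2 H) as KEY.
  set (E := fun v => exists q, S q /\ h2 q > 0 /\ v = h2 q / (h2 q - h1 q)).
  assert (bnd : forall p, S p -> h1 p > 0 -> forall v, E v -> v <= - h2 p / (h1 p - h2 p)).
  { intros p' Hp' P1' v [q' [Hq' [Q2' ->]]].
    assert (h2 p' <= 0) by (destruct (H p' Hp'); lra).
    assert (h1 q' <= 0) by (destruct (H q' Hq'); lra).
    pose proof (KEY p' q' Hp' Hq' P1' Q2').
    apply div_le; [lra|lra|nra]. }
  destruct (completeness E) as [m [Hub Hlub]].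
  { exists (- h2 p / (h1 p - h2 p)). intros v Hv. apply (bnd p Hp P1 v Hv). }
  { exists (h2 q / (h2 q - h1 q)). exists q. split; auto. }
  assert (Hsq : forall q, S q -> h2 q > 0 -> h2 q / (h2 q - h1 q) <= m).
  { intros q' Hq' Q2'. apply Hub. exists q'. auto. }
  assert (Hrp : forall p, S p -> h1 p > 0 -> m <= - h2 p / (h1 p - h2 p)).
  { intros p' Hp' P1'. apply Hlub. intros v Hv. apply (bnd p' Hp' P1' v Hv). }
  assert (Hm0 : 0 <= m).
  { eapply Rle_trans. 2: apply (Hsq q Hq Q2). assert (h1 q <= 0) by (destruct (H q Hq); lra).
    unfold Rdiv. apply Rmult_le_pos. lra. left; apply Rinv_0_lt_compat; lra. }
  assert (Hm1 : m <= 1).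
  { eapply Rle_trans. apply (Hrp p Hp P1). assert (h2 p <= 0) by (destruct (H p Hp); lra).
    apply div_le1; lra. }
  exists m. split. lra. intros x Hx.
  destruct (Rlt_or_le 0 (h1 x)) as [X1|X1].
  - assert (h2 x <= 0) by (destruct (H x Hx); lra).
    pose proof (le_div_mul (x:=- h2 x) (d := h1 x - h2 x) ltac:(lra) (Hrp x Hx X1)). nra.
  - destruct (Rlt_or_le 0 (h2 x)) as [X2|X2].
    + pose proof (div_le_mul (x:=h2 x) (d := h2 x - h1 x) ltac:(lra) (Hsq x Hx X2)). nra.
    + nra.
Qed.

Lemma kyfan (S0 : X -> Prop) (F : (X -> R) -> Prop)
  (HFaff : forall g, F g -> affine_on S0 g)
  (HFcc : forall t g1 g2, 0 <= t <= 1 -> F g1 -> F g2 ->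
     exists h, F h /\ forall x, h x = t * g1 x + (1 - t) * g2 x)
  (eps : R) (g0 : X -> R) (Hg0 : F g0) :
  forall gs : list (X -> R), (forall g, In g gs -> F g) ->
  forall S, convex S -> (forall x, S x -> S0 x) ->
  (forall x, S x -> exists g, In g gs /\ g x <= eps) ->
  exists h, F h /\ forall x, S x -> h x <= eps.
Proof.
  induction gs as [|g gs IH]; intros Hgs S HS HS0 Hcov.
  - exists g0. split; auto. intros x Hx. destruct (Hcov x Hx) as [g [[] _]].
  - set (S' := fun x => S x /\ g x > eps).
    assert (HgF : F g) by (apply Hgs; left; auto).
    destruct (IH (fun g' H => Hgs g' (or_intror H)) S') as [h' [Hh'F Hh']].
    + intros t p q Ht [Hp Gp] [Hq Gq]. split. apply HS; auto.
      rewrite (HFaff g HgF) by auto.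
      destruct (Rle_lt_or_eq_dec 0 t (proj1 Ht)) as [Ht0|Ht0].
      * assert (t * (g p - eps) > 0) by (apply Rmult_lt_0_compat; lra).
        assert ((1 - t) * (g q - eps) >= 0) by (apply Rle_ge, Rmult_le_pos; lra). nra.
      * subst t. lra.
    + intros x [Hx _]. auto.
    + intros x [Hx Gx]. destruct (Hcov x Hx) as [g' [[<-|Hin] Hg']]. lra. exists g'; auto.
    + destruct (@two S (fun x => h' x - eps) (fun x => g x - eps)) as [l [Hl Hlx]].
      * auto.
      * intros t p q Ht Hp Hq. rewrite (HFaff h' Hh'F) by auto. ring.
      * intros t p q Ht Hp Hq. rewrite (HFaff g HgF) by auto. ring.
      * intros x Hx. destruct (Rle_or_lt (g x) eps). right; lra. left. assert (h' x <= eps) by (apply Hh'; split; auto). lra.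
      * destruct (HFcc l h' g Hl Hh'F HgF) as [h [HhF Hh]]. exists h. split; auto.
        intros x Hx. rewrite Hh. specialize (Hlx x Hx). lra.
Qed.
End KF.

Lemma K_sub_self k (a : K k) : Kadd k a (Kopp k a) = K0 k.
Proof. apply Kadd_opp. Qed.
Lemma K_diff_id k (a b : K k) : Kadd k b (Kopp k (Kadd k b (Kopp k a))) = a.
Proof. destruct k; simpl in *; [ring| destruct a, b; unfold Cadd, Copp; simpl; f_equal; ring]. Qed.
Lemma Kabs_diff k (a b : K k) : Kabs k a <= Kabs k b + Kabs k (Kadd k b (Kopp k a)).
Proof. rewrite <- (K_diff_id a b) at 1. eapply Rle_trans. apply Kabs_add. rewrite Kabs_opp. lra. Qed.
Lemma Kabs_eq0 k (a : K k) : Kabs k a = 0 -> a = K0 k.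
Proof. destruct k; simpl in *. intro H. destruct (Req_dec a 0); auto. exfalso. pose proof (Rabs_pos_lt a H0). lra.
  destruct a as [x y]. unfold Cmod. simpl. intro H. apply sqrt_eq_0 in H.
  assert (x = 0) by (pose proof (sq_nonneg x); pose proof (sq_nonneg y); nra).
  assert (y = 0) by (pose proof (sq_nonneg x); pose proof (sq_nonneg y); nra). subst; reflexivity.
  pose proof (sq_nonneg x); pose proof (sq_nonneg y); lra. Qed.
Lemma Kabs_small k (a : K k) : (forall eta, 0 < eta -> Kabs k a <= eta) -> a = K0 k.
Proof. intro H. apply Kabs_eq0. pose proof (Kabs_ge0 a). destruct (Req_dec (Kabs k a) 0); auto.
  specialize (H (Kabs k a / 2) ltac:(lra)). lra. Qed.
Lemma Kopp0 k : Kopp k (K0 k) = K0 k.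
Proof. destruct k; simpl; [ring | unfold Copp; simpl; f_equal; ring]. Qed.
Lemma K_eq_of_sub k (a b : K k) : Kadd k a (Kopp k b) = K0 k -> a = b.
Proof. intro H. rewrite <- (K_diff_id b a), H, Kopp0, Kadd_0. reflexivity. Qed.
Lemma K_d_eq k (a b : K k) : Kadd k (Kmul k (K1 k) a) (Kmul k (Kopp k (K1 k)) b) = Kadd k a (Kopp k b).
Proof. destruct k; simpl in *; [ring| destruct a, b; unfold Cadd, Cmul, Copp; simpl; f_equal; ring]. Qed.

Lemma dual_ext k (V : VSpace k) (X : lc_subspace V) y1 y2 : is_dual X y1 -> (forall h, y1 h = y2 h) -> is_dual X y2.
Proof. intros H He. replace y2 with y1; auto. apply functional_extensionality; auto. Qed.

Lemma K_split k (a b : K k) : Kadd k b (Kadd k a (Kopp k b)) = a.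
Proof. destruct k; simpl in *; [ring| destruct a, b; unfold Cadd, Copp; simpl; f_equal; ring]. Qed.
Lemma K_conv_raw k (T T' Y w1 w2 : K k) :
  Kadd k (Kmul k T (Kadd k (Kmul k (K1 k) Y) (Kmul k (Kopp k (K1 k)) w1)))
         (Kmul k T' (Kadd k (Kmul k (K1 k) Y) (Kmul k (Kopp k (K1 k)) w2)))
  = Kadd k (Kmul k (K1 k) (Kmul k (Kadd k T T') Y)) (Kmul k (Kopp k (K1 k)) (Kadd k (Kmul k T w1) (Kmul k T' w2))).
Proof. destruct k; simpl in *; [ring| destruct T, T', Y, w1, w2; unfold Cadd, Cmul, Copp; simpl; f_equal; ring]. Qed.
Lemma K_conv k (T T' Y w1 w2 : K k) : Kadd k T T' = K1 k ->
  Kadd k (Kmul k (K1 k) Y) (Kmul k (Kopp k (K1 k)) (Kadd k (Kmul k T w1) (Kmul k T' w2))) =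
  Kadd k (Kmul k T (Kadd k (Kmul k (K1 k) Y) (Kmul k (Kopp k (K1 k)) w1)))
         (Kmul k T' (Kadd k (Kmul k (K1 k) Y) (Kmul k (Kopp k (K1 k)) w2))).
Proof. intro H. rewrite K_conv_raw, H, (Kmul_1 k (Kmul k (K1 k) Y)). reflexivity. Qed.

Lemma nat_big A : exists n : nat, A < INR n.
Proof. destruct (archimed A) as [H1 H2]. destruct (Z_lt_le_dec 0 (up A)) as [Hp|Hp].
  - exists (Z.to_nat (up A)). rewrite INR_IZR_INZ, Z2Nat.id by lia. auto.
  - exists 0%nat. simpl. apply IZR_le in Hp. lra. Qed.


Lemma K_tri_gen k (P Q1 Q2 : K k) : P = Kadd k (Kopp k Q1) Q2 -> Kabs k P <= Kabs k Q1 + Kabs k Q2.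
Proof. intros ->. eapply Rle_trans. apply Kabs_add. rewrite Kabs_opp. lra. Qed.
Lemma K_tri2 k (A C Y : K k) : Kabs k (Kadd k A (Kopp k C)) <= Kabs k (Kadd k Y (Kopp k A)) + Kabs k (Kadd k Y (Kopp k C)).
Proof. apply K_tri_gen. destruct k; simpl in *; [ring| destruct A, C, Y; unfold Cadd, Copp; simpl; f_equal; ring]. Qed.
Lemma K_tri3 k (A B C Y : K k) : Kabs k (Kadd k (Kadd k A (Kopp k C)) (Kopp k (Kadd k B (Kopp k C)))) <=
  Kabs k (Kadd k Y (Kopp k A)) + Kabs k (Kadd k Y (Kopp k B)).
Proof. apply K_tri_gen. destruct k; simpl in *; [ring| destruct A, B, C, Y; unfold Cadd, Copp; simpl; f_equal; ring]. Qed.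
Lemma K_tri4 k (A C X Y : K k) : Kabs k (Kadd k (Kadd k C X) (Kopp k Y)) <=
  Kabs k (Kadd k (Kadd k A (Kopp k C)) (Kopp k X)) + Kabs k (Kadd k Y (Kopp k A)).
Proof. rewrite <- (Kabs_opp (Kadd k Y (Kopp k A))). apply K_tri_gen. destruct k; simpl in *; [ring| destruct A, C, X, Y; unfold Cadd, Copp; simpl; f_equal; ring]. Qed.

Section Main.
Variables (k : scalar_field) (Om om : Type) (E : lcHs k).
Variable G : (E -> K k) -> Prop.
Hypothesis HG : determines_boundedness E G.
Hypothesis HEloc : locally_complete E.
Variables (FO : lc_subspace (fun_vs Om (Kvs k))) (FOE : lc_subspace (fun_vs Om E)).
Variables (TE : (Om -> E) -> om -> E) (TK : (Om -> K k) -> om -> K k).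
Hypothesis HTlin : T_linear E FO FOE TE TK.
Hypothesis Hcons : consistent E FO FOE TE TK.
Variable nu : om -> R.
Hypothesis Hnu : forall x, 0 < nu x.
Hypothesis HBcomp : is_compact FO (Bnu FO TK nu).
Variable U : om -> Prop.
Hypothesis HU : set_of_uniqueness FO TK nu U.
Variable f : om -> E.
Hypothesis Hf : FnuG E FO TK nu G U f.

Notation FunK := (fun_vs Om (Kvs k)).

Lemma TK_lcomb a g b h x : ls_mem FO g -> ls_mem FO h ->
  TK (lcomb FunK a g b h) x = Kadd k (Kmul k a (TK g x)) (Kmul k b (TK h x)).
Proof. intros. rewrite (proj1 HTlin) by auto. reflexivity. Qed.

Lemma TK_scal a g x : ls_mem FO g -> TK (vscal a g) x = Kmul k a (TK g x).
Proof. intros. rewrite <- (lcomb_0r a g g), TK_lcomb, Kmul_0l, Kadd_0 by auto. reflexivity. Qed.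

Lemma zero_in_eps : in_eps E FO (fun _ => vzero E).
Proof. split.
  - intros. unfold lcomb. rewrite !vscal_zero, vadd0. reflexivity.
  - intro i. exists (fun _ => False), 0. split; [|split; [|split]].
    + intros x z a b [].
    + split. intros x []. intros I O _ _. exists nil. intros x [].
    + lra.
    + intros. rewrite sn_zero. lra.
Qed.

Lemma TKx_dual x : is_dual FO (fun g => TK g x).
Proof. apply (proj2 (Hcons zero_in_eps) x). Qed.

Lemma dual_E (e' : E -> K k) : G e' -> is_dual E e'.
Proof. intro. apply (proj1 HG); auto. Qed.
Lemma lin_E (e' : E -> K k) : G e' -> is_linear_on E e'.
Proof. intro. apply (dual_E H). Qed.

Lemma Bnu_mem g : Bnu FO TK nu g -> ls_mem FO g.
Proof. intros [[H _] _]. exact H. Qed.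

Lemma Bnu_lcomb a g b h : Bnu FO TK nu g -> Bnu FO TK nu h -> Kabs k a + Kabs k b <= 1 ->
  Bnu FO TK nu (lcomb FunK a g b h).
Proof.
  intros Hg Hh Hab. pose proof (Bnu_mem Hg). pose proof (Bnu_mem Hh).
  assert (B : forall x, Kabs k (TK (lcomb FunK a g b h) x) * nu x <= 1).
  { intro x. rewrite TK_lcomb by auto. pose proof (Hnu x).
    eapply Rle_trans. apply Rmult_le_compat_r. lra. apply Kabs_add. rewrite !Kabs_mul.
    pose proof (proj2 Hg x). pose proof (proj2 Hh x). pose proof (Kabs_ge0 a). pose proof (Kabs_ge0 b).
    pose proof (Kabs_ge0 (TK g x)). pose proof (Kabs_ge0 (TK h x)).
    apply Rle_trans with (Kabs k a * (Kabs k (TK g x) * nu x) + Kabs k b * (Kabs k (TK h x) * nu x)).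
    right; ring. nra. }
  split; auto. split. apply ls_lcomb; auto. exists 1. auto.
Qed.

Lemma Bnu_scal c g : Bnu FO TK nu g -> Kabs k c <= 1 -> Bnu FO TK nu (@vscal k FunK c g).
Proof. intros. rewrite <- (@lcomb_0r k FunK c g g). apply Bnu_lcomb; auto. rewrite Kabs_0. lra. Qed.

Lemma Bnu_U g : Bnu FO TK nu g -> (forall x, U x -> TK g x = K0 k) -> g = fun _ => K0 k.
Proof. intros [Hg _] H. apply HU; auto. Qed.

Hypothesis Hom : inhabited om.

Lemma zero_dual : is_dual FO (fun _ => K0 k).
Proof. destruct Hom as [x0].
  pose proof (dual_comb (K0 k) (K0 k) (TKx_dual x0) (TKx_dual x0)) as H.
  apply (dual_ext H). intro g. simpl. rewrite !Kmul_0l, Kadd_0. reflexivity. Qed.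

Definition wl (l : list (K k * om)) (h : Om -> K k) : K k :=
  fold_right (fun p acc => Kadd k (Kmul k (fst p) (TK h (snd p))) acc) (K0 k) l.
Definition sl (l : list (K k * om)) : E :=
  fold_right (fun p acc => vadd (vscal (fst p) (f (snd p))) acc) (vzero E) l.
Definition valid (l : list (K k * om)) := forall p, In p l -> U (snd p).
Definition scale (c : K k) (l : list (K k * om)) := map (fun p => (Kmul k c (fst p), snd p)) l.

Lemma wl_dual l : is_dual FO (wl l).
Proof. induction l as [|[a x] l IH]. exact zero_dual.
  pose proof (dual_comb a (K1 k) (TKx_dual x) IH) as H.
  apply (dual_ext H). intro g. simpl. rewrite Kmul_1. reflexivity. Qed.

Lemma wl_app l1 l2 h : wl (l1 ++ l2) h = Kadd k (wl l1 h) (wl l2 h).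
Proof. induction l1 as [|p l1 IH]; simpl. rewrite Kadd_0l; auto. rewrite IH, Kadd_assoc. reflexivity. Qed.

Lemma wl_scale c l h : wl (scale c l) h = Kmul k c (wl l h).
Proof. induction l as [|p l IH]; simpl. rewrite Kmul_0r; auto. rewrite IH, Kmul_addr, Kmul_assoc. reflexivity. Qed.

Lemma valid_app l1 l2 : valid l1 -> valid l2 -> valid (l1 ++ l2).
Proof. intros H1 H2 p Hp. apply in_app_or in Hp. destruct Hp; auto. Qed.
Lemma valid_scale c l : valid l -> valid (scale c l).
Proof. intros H p Hp. unfold scale in Hp. apply in_map_iff in Hp. destruct Hp as [q [<- Hq]]. simpl. apply H; auto. Qed.

Lemma sl_eval (e' : E -> K k) g l : G e' -> (forall x, U x -> TK g x = e' (f x)) -> valid l ->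
  e' (sl l) = wl l g.
Proof. intros He Hg. induction l as [|[a x] l IH]; intro Hv; simpl.
  - apply (lin_zero (lin_E He)).
  - rewrite (lin_add (lin_E He)) by apply lcs_full. rewrite (lin_scal _ (lin_E He)) by apply lcs_full.
    rewrite IH, Hg. reflexivity. apply (Hv (a, x)); left; auto. intros p Hp; apply Hv; right; auto.
Qed.

Lemma ex_sel (e' : E -> K k) : exists p : (Om -> K k) * R, G e' ->
  Fnu FO TK nu (fst p) /\ 0 < snd p /\ (forall x, Kabs k (TK (fst p) x) * nu x <= snd p) /\
  forall x, U x -> TK (fst p) x = e' (f x).
Proof. destruct (classic (G e')) as [He|He].
  - destruct (Hf He) as [fe [Hfe Hfx]]. pose proof Hfe as [Hm [C HC]].
    exists (fe, Rmax C 1). intros _. simpl. split; [exact Hfe|]. split; [|split; [|exact Hfx]].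
    + pose proof (Rmax_r C 1). lra.
    + intro x. eapply Rle_trans. apply HC. apply Rmax_l.
  - exists ((fun _ => K0 k), 1). intro; contradiction.
Qed.

Definition sel e' := proj1_sig (constructive_indefinite_description _ (ex_sel e')).
Definition gg e' := fst (sel e').
Definition NN e' := snd (sel e').
Lemma sel_spec e' : G e' -> Fnu FO TK nu (gg e') /\ 0 < NN e' /\ (forall x, Kabs k (TK (gg e') x) * nu x <= NN e') /\
  forall x, U x -> TK (gg e') x = e' (f x).
Proof. unfold gg, NN, sel. destruct (constructive_indefinite_description _ (ex_sel e')) as [p Hp]. simpl. auto. Qed.

Lemma boundG e' z eps : G e' -> is_dual FO z -> 0 <= eps -> (forall h, Bnu FO TK nu h -> Kabs k (z h) <= eps) ->
  Kabs k (z (gg e')) <= eps * NN e'.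
Proof.
  intros He Hz Heps Hb. destruct (sel_spec He) as [[Hgm _] [HN [HgB _]]].
  set (N := NN e') in *. set (g := gg e') in *.
  set (h := @vscal k FunK (KofR k (/ N)) g).
  assert (Hh : Bnu FO TK nu h).
  { assert (B : forall x, Kabs k (TK h x) * nu x <= 1).
    { intro x. unfold h. rewrite TK_scal, Kabs_mul, Kabs_KofR by auto.
      rewrite Rabs_right by (apply Rle_ge; left; apply Rinv_0_lt_compat; auto).
      rewrite Rmult_assoc. apply Rmult_le_reg_l with N; auto. rewrite <- Rmult_assoc, Rinv_r by lra.
      rewrite Rmult_1_l, Rmult_1_r. apply HgB. }
    split; auto. split. apply ls_scal; auto. exists 1; auto. }
  assert (Hgh : g = @vscal k FunK (KofR k N) h).
  { unfold h. rewrite vscalA, <- KofR_mul, Rinv_r, KofR_1, vscal1 by lra. reflexivity. }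
  rewrite Hgh, (lin_scal _ (proj1 Hz)), Kabs_mul, Kabs_KofR, Rabs_right by (auto; try apply ls_scal; auto; lra).
  rewrite Rmult_comm. apply Rmult_le_compat_r. lra. auto.
Qed.

Definition dl (y : (Om -> K k) -> K k) l h :=
  Kadd k (Kmul k (K1 k) (y h)) (Kmul k (Kopp k (K1 k)) (wl l h)).
Lemma dl_dual y l : is_dual FO y -> is_dual FO (dl y l).
Proof. intro Hy. apply (dual_comb _ _ Hy (wl_dual l)). Qed.

Lemma density y eps : is_dual FO y -> 0 < eps ->
  exists l, valid l /\ forall h, Bnu FO TK nu h -> Kabs k (dl y l h) <= eps.
Proof.
  intros Hy Heps.
  set (I := {l : list (K k * om) | valid l}).
  set (O := fun (i : I) (h : Om -> K k) => KRe k (dl y (proj1_sig i) h) < eps).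
  assert (Hopen : forall i, is_open FO (O i)).
  { intros [l Hl] x Hx Ox. unfold O in Ox; simpl in Ox.
    destruct (dual_cont (dl_dual l Hy)) as [j [C [HC Hc]]].
    exists j, ((eps - KRe k (dl y l x)) / (C + 1)). split.
    { apply Rdiv_lt_0_compat; lra. }
    intros z Hz Hsn. unfold O; simpl.
    pose proof (Hc x z Hx Hz) as Hcz.
    rewrite <- (K_split (dl y l z) (dl y l x)), KRe_add.
    pose proof (KRe_le (Kadd k (dl y l z) (Kopp k (dl y l x)))).
    assert (C * ls_sn FO j (vsub FunK z x) <= C * ((eps - KRe k (dl y l x)) / (C + 1))).
    { apply Rmult_le_compat_l; lra. }
    assert (C * ((eps - KRe k (dl y l x)) / (C + 1)) < eps - KRe k (dl y l x)).
    { apply Rlt_le_trans with ((C+1) * ((eps - KRe k (dl y l x)) / (C + 1))).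
      apply Rmult_lt_compat_r. apply Rdiv_lt_0_compat; lra. lra. right; field; lra. }
    lra. }
  assert (Hcover : forall h, Bnu FO TK nu h -> exists i, O i h).
  { intros h Hh. destruct (classic (exists x, U x /\ TK h x <> K0 k)) as [[x [Ux Hne]]|Hno].
    - destruct (K_solve _ Hne (KRe k (y h))) as [t Ht].
      assert (Hv : valid ((t, x) :: nil)). { intros p [<-|[]]. exact Ux. }
      exists (exist _ _ Hv). unfold O; simpl. unfold dl. rewrite K_d_eq, KRe_add, KRe_opp. simpl.
      rewrite Kadd_0, Ht. lra.
    - assert (Hh0 : h = fun _ => K0 k).
      { apply Bnu_U; auto. intros x Ux. apply NNPP. intro. apply Hno. exists x. auto. }
      assert (Hv : valid nil). { intros p []. }
      exists (exist _ _ Hv). unfold O; simpl. unfold dl. rewrite K_d_eq, KRe_add, KRe_opp. simpl.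
      assert (y h = K0 k). { rewrite Hh0. apply (lin_zero (proj1 Hy)). }
      rewrite H, KRe_0. lra. }
  destruct (proj2 HBcomp I O Hopen Hcover) as [L HL].
  set (cc := fun t (p q : Om -> K k) => lcomb FunK (KofR k t) p (KofR k (1 - t)) q).
  set (F := fun g : (Om -> K k) -> R => exists l, valid l /\ forall h, g h = KRe k (dl y l h)).
  assert (Hnil : valid nil) by (intros p []).
  set (gs := map (fun (i : I) h => KRe k (dl y (proj1_sig i) h)) L).
  assert (HFaff : forall g, F g -> affine_on cc (Bnu FO TK nu) g).
  { intros g [l [Hl Hg]] t p q Ht Hp Hq. rewrite !Hg. unfold cc.
    rewrite (proj1 (dl_dual l Hy)) by (apply Bnu_mem; auto).
    rewrite KRe_add, !KRe_realmul. reflexivity. }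
  assert (HFcc : forall t g1 g2, 0 <= t <= 1 -> F g1 -> F g2 ->
     exists h, F h /\ forall x, h x = t * g1 x + (1 - t) * g2 x).
  { intros t g1 g2 Ht [l1 [V1 H1]] [l2 [V2 H2]].
    exists (fun h => KRe k (dl y (scale (KofR k t) l1 ++ scale (KofR k (1 - t)) l2) h)). split.
    + exists (scale (KofR k t) l1 ++ scale (KofR k (1 - t)) l2). split. apply valid_app; apply valid_scale; auto. intro; reflexivity.
    + intro h. rewrite H1, H2. unfold dl. rewrite wl_app, !wl_scale, K_conv.
      rewrite KRe_add, !KRe_realmul. reflexivity.
      rewrite <- KofR_add. replace (t + (1 - t)) with 1 by ring. apply KofR_1. }
  assert (Hg0 : F (fun h => KRe k (dl y nil h))). { exists nil. split; auto. }
  assert (Hgs : forall g, In g gs -> F g).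
  { intros g Hg. apply in_map_iff in Hg. destruct Hg as [i [<- _]]. exists (proj1_sig i). split.
    apply (proj2_sig i). intro; reflexivity. }
  assert (HS : convex cc (Bnu FO TK nu)).
  { intros t p q Ht Hp Hq. unfold cc. apply Bnu_lcomb; auto. rewrite !Kabs_KofR.
    rewrite !Rabs_right by lra. lra. }
  assert (Hcov : forall h, Bnu FO TK nu h -> exists g, In g gs /\ g h <= eps).
  { intros h Hh. destruct (HL h Hh) as [i [Hi Oi]]. exists (fun h => KRe k (dl y (proj1_sig i) h)).
    split. apply in_map_iff. exists i. auto. unfold O in Oi. lra. }
  destruct (kyfan HFaff HFcc Hg0 Hgs HS (fun x H => H) Hcov) as [hs [[l [Hl Hhs]] Hb]].
  exists l. split; auto. intros h Hh.
    destruct (K_rotate (dl y l h)) as [c [Hc1 Hc]].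
    rewrite <- Hc, <- (lin_scal _ (proj1 (dl_dual l Hy))) by (apply Bnu_mem; auto).
    rewrite <- Hhs. apply Hb. apply Bnu_scal; auto. lra.
Qed.

Definition Dset : E -> Prop := fun x => forall e', G e' -> Kabs k (e' x) <= NN e'.

Lemma NN_pos e' : G e' -> 0 < NN e'.
Proof. intro He. apply (sel_spec He). Qed.

Lemma D_closed : is_closed E Dset.
Proof. split. intros; apply lcs_full.
  intros x _ Hx. apply not_all_ex_not in Hx. destruct Hx as [e' He'].
  apply imply_to_and in He'. destruct He' as [He Hb]. apply Rnot_le_lt in Hb.
  destruct (dual_cont (dual_E He)) as [i [C [HC Hc]]].
  exists i, ((Kabs k (e' x) - NN e') / (C + 1)). split. apply Rdiv_lt_0_compat; lra.
  intros z _ Hsn Dz. specialize (Dz e' He).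
  pose proof (Kabs_diff (e' x) (e' z)). pose proof (Hc x z (lcs_full E x) (lcs_full E z)).
  assert (C * ls_sn E i (vsub E z x) <= C * ((Kabs k (e' x) - NN e') / (C + 1))) by (apply Rmult_le_compat_l; lra).
  assert (C * ((Kabs k (e' x) - NN e') / (C + 1)) < Kabs k (e' x) - NN e').
  { apply Rlt_le_trans with ((C+1) * ((Kabs k (e' x) - NN e') / (C + 1))).
    apply Rmult_lt_compat_r. apply Rdiv_lt_0_compat; lra. lra. right; field; lra. }
  lra.
Qed.

Lemma D_bounded : is_bounded E Dset.
Proof. apply (proj2 (proj2 (proj2 HG))). intros e' He. exists (NN e'). intros x Hx. apply Hx; auto. Qed.

Lemma D_absconv : abs_convex Dset.
Proof. intros x z a b Hx Hz Hab e' He.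
  rewrite (proj1 (dual_E He)) by apply lcs_full.
  eapply Rle_trans. apply Kabs_add. rewrite !Kabs_mul.
  pose proof (Hx e' He). pose proof (Hz e' He). pose proof (NN_pos He).
  pose proof (Kabs_ge0 a). pose proof (Kabs_ge0 b).
  apply Rle_trans with (Kabs k a * NN e' + Kabs k b * NN e').
  apply Rplus_le_compat; apply Rmult_le_compat_l; auto. nra.
Qed.

Lemma in_mult_of t x : 0 < t -> (forall e', G e' -> Kabs k (e' x) <= t * NN e') -> in_mult E Dset t x.
Proof. intros Ht Hx. exists (vscal (KofR k (/ t)) x). split.
  - intros e' He. rewrite (lin_scal _ (lin_E He)) by apply lcs_full. rewrite Kabs_mul, Kabs_KofR.
    rewrite Rabs_right by (apply Rle_ge; left; apply Rinv_0_lt_compat; auto).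
    apply Rmult_le_reg_l with t; auto. rewrite <- Rmult_assoc, Rinv_r, Rmult_1_l by lra. apply Hx; auto.
  - rewrite vscalA, <- KofR_mul, Rinv_r, KofR_1, vscal1 by lra. reflexivity.
Qed.

Lemma G_sep x : (forall e', G e' -> e' x = K0 k) -> x = vzero E.
Proof. intro H. apply (ls_haus E). apply lcs_full. intro i.
  set (B := fun z : E => exists n : nat, z = vscal (KofR k (INR n)) x).
  assert (HB : is_bounded E B).
  { apply (proj2 (proj2 (proj2 HG))). intros e' He. exists 0. intros z [n ->].
    rewrite (lin_scal _ (lin_E He)), H, Kmul_0r, Kabs_0 by (auto; apply lcs_full). lra. }
  destruct (HB i) as [C HC]. pose proof (sn_ge0 i (lcs_full E x)).
  destruct (Req_dec (ls_sn E i x) 0); auto. exfalso.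
  destruct (nat_big (C / ls_sn E i x)) as [n Hn].
  specialize (HC (vscal (KofR k (INR n)) x) (ex_intro _ n eq_refl)).
  rewrite sn_scal_real, Rabs_right in HC by (auto; try apply lcs_full; apply Rle_ge, pos_INR).
  assert (C < INR n * ls_sn E i x).
  { apply Rmult_lt_reg_r with (/ ls_sn E i x). apply Rinv_0_lt_compat; lra.
    rewrite Rmult_assoc, Rinv_r, Rmult_1_r by lra. exact Hn. }
  lra.
Qed.

Lemma G_eq a b : (forall e', G e' -> e' a = e' b) -> a = b.
Proof. intro H. assert (Hs : vsub E a b = vzero E).
  { apply G_sep. intros e' He. rewrite (lin_sub (lin_E He)) by apply lcs_full. rewrite H, Kadd_opp; auto. }
  unfold vsub in Hs. rewrite <- (vadd0 _ a), <- (vaddN _ b), (vaddC _ b), vaddA, Hs, vadd0l. reflexivity.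
Qed.

Definition epsn (n : nat) := / (INR n + 1).
Lemma epsn_pos n : 0 < epsn n.
Proof. unfold epsn. apply Rinv_0_lt_compat. pose proof (pos_INR n). lra. Qed.
Lemma epsn_le1 n : epsn n <= 1.
Proof. unfold epsn. pose proof (pos_INR n). rewrite <- Rinv_1. apply Rinv_le_contravar; lra. Qed.
Lemma epsn_le n N : (0 < N)%nat -> (N <= n)%nat -> epsn n <= / INR N.
Proof. intros. unfold epsn. apply Rinv_le_contravar. apply lt_0_INR; auto. apply le_INR in H0. lra. Qed.

Lemma exists_rep y : is_dual FO y -> exists e, forall e', G e' -> e' e = y (gg e').
Proof.
  intro Hy.
  set (lseq := fun n => proj1_sig (constructive_indefinite_description _ (density Hy (epsn_pos n)))).
  assert (Hl : forall n, valid (lseq n) /\ forall h, Bnu FO TK nu h -> Kabs k (dl y (lseq n) h) <= epsn n).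
  { intro n. unfold lseq. destruct (constructive_indefinite_description _ _) as [l Hl']. exact Hl'. }
  assert (Hw : forall n e', G e' -> Kabs k (Kadd k (y (gg e')) (Kopp k (wl (lseq n) (gg e')))) <= epsn n * NN e').
  { intros n e' He. rewrite <- K_d_eq. apply (boundG He (dl_dual _ Hy)). left; apply epsn_pos. apply Hl. }
  assert (Hs : forall n e', G e' -> e' (sl (lseq n)) = wl (lseq n) (gg e')).
  { intros n e' He. apply sl_eval; auto. apply (sel_spec He). apply Hl. }
  set (xs := fun n => vsub E (sl (lseq n)) (sl (lseq 0%nat))).
  assert (Hxs : forall n e', G e' -> e' (xs n) = Kadd k (wl (lseq n) (gg e')) (Kopp k (wl (lseq 0%nat) (gg e')))).
  { intros n e' He. unfold xs. rewrite (lin_sub (lin_E He)) by apply lcs_full. rewrite !Hs; auto. }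
  assert (Hspan : forall n, in_span E Dset (xs n)).
  { intro n. exists 2%nat. apply in_mult_of. simpl; lra. intros e' He. rewrite Hxs by auto.
    eapply Rle_trans. apply (K_tri2 _ _ (y (gg e'))).
    pose proof (Hw n e' He). pose proof (Hw 0%nat e' He). pose proof (epsn_le1 n). pose proof (epsn_le1 0%nat).
    pose proof (NN_pos He). simpl INR. nra. }
  assert (Hcauchy : forall eps, 0 < eps -> exists N, forall n m, (N <= n)%nat -> (N <= m)%nat ->
          in_mult E Dset eps (vsub E (xs n) (xs m))).
  { intros eps Heps. destruct (archimed_cor1 (eps / 2) ltac:(lra)) as [N [HN HN0]].
    exists N. intros n m Hn Hm. apply in_mult_of; auto. intros e' He.
    rewrite (lin_sub (lin_E He)), !Hxs by (auto; apply lcs_full).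
    eapply Rle_trans. apply (K_tri3 _ _ _ (y (gg e'))).
    pose proof (Hw n e' He). pose proof (Hw m e' He). pose proof (epsn_le HN0 Hn). pose proof (epsn_le HN0 Hm).
    pose proof (NN_pos He). nra. }
  destruct (HEloc D_closed D_bounded D_absconv Hspan Hcauchy) as [xinf [_ Hconv]].
  exists (vadd (sl (lseq 0%nat)) xinf). intros e' He.
  apply K_eq_of_sub. apply Kabs_small. intros eta Heta.
  pose proof (NN_pos He) as HN.
  destruct (Hconv (eta / (2 * NN e'))) as [N1 HN1]. apply Rdiv_lt_0_compat; lra.
  destruct (archimed_cor1 (eta / (2 * NN e'))) as [N2 [HN2 HN20]]. apply Rdiv_lt_0_compat; lra.
  set (n := max N1 N2).
  destruct (HN1 n (Nat.le_max_l _ _)) as [d [Dd Hd]].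
  pose proof (Dd e' He) as Hde.
  assert (He1 : Kabs k (e' (vsub E (xs n) xinf)) <= eta / 2).
  { rewrite Hd, (lin_scal _ (lin_E He)), Kabs_mul, Kabs_KofR by apply lcs_full.
    rewrite Rabs_right by (apply Rle_ge; left; apply Rdiv_lt_0_compat; lra).
    apply Rle_trans with (eta / (2 * NN e') * NN e'). apply Rmult_le_compat_l; auto. left; apply Rdiv_lt_0_compat; lra.
    right; field; lra. }
  rewrite (lin_sub (lin_E He)), Hxs in He1 by (auto; apply lcs_full).
  rewrite (lin_add (lin_E He)), Hs by (auto; apply lcs_full).
  eapply Rle_trans. apply (K_tri4 (wl (lseq n) (gg e'))).
  pose proof (Hw n e' He). pose proof (epsn_le HN20 (Nat.le_max_r N1 N2)) as Hen. fold n in Hen.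
  assert (epsn n * NN e' <= eta / 2).
  { apply Rle_trans with (/ INR N2 * NN e'). apply Rmult_le_compat_r; lra.
    apply Rle_trans with (eta / (2 * NN e') * NN e'). apply Rmult_le_compat_r; lra. right; field; lra. }
  lra.
Qed.

Definition u (y : (Om -> K k) -> K k) : E :=
  match excluded_middle_informative (is_dual FO y) with
  | left H => proj1_sig (constructive_indefinite_description _ (exists_rep H))
  | right _ => vzero E end.

Lemma u_spec y : is_dual FO y -> forall e', G e' -> e' (u y) = y (gg e').
Proof. intro Hy. unfold u. destruct excluded_middle_informative as [H|H]; [|contradiction].
  destruct constructive_indefinite_description as [e He]. simpl. auto. Qed.

Lemma u_lin y1 y2 a b : is_dual FO y1 -> is_dual FO y2 ->
  u (fun g => Kadd k (Kmul k a (y1 g)) (Kmul k b (y2 g))) = lcomb E a (u y1) b (u y2).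
Proof. intros H1 H2. apply G_eq. intros e' He.
  rewrite u_spec by (auto; apply dual_comb; auto).
  rewrite (proj1 (dual_E He)) by apply lcs_full. rewrite !u_spec by auto. reflexivity. Qed.

Lemma polar_bounded : is_bounded E (fun e => exists y, Bnu_polar FO TK nu y /\ e = u y).
Proof. apply (proj2 (proj2 (proj2 HG))). intros e' He. exists (NN e'). intros e [y [[Hy Hp] ->]].
  rewrite u_spec by auto. rewrite <- (Rmult_1_l (NN e')). apply boundG; auto. lra. Qed.

Lemma u_cont : forall i : ls_idx E, exists (Kset : (Om -> K k) -> Prop) (C : R),
    abs_convex (V:=FunK) Kset /\ is_compact FO Kset /\ 0 <= C /\
    forall y, is_dual FO y ->
      forall s, 0 <= s -> (forall g, Kset g -> Kabs k (y g) <= s) ->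
        ls_sn E i (u y) <= C * s.
Proof.
  intro i. destruct (polar_bounded i) as [Ci HCi].
  exists (Bnu FO TK nu), (Rmax Ci 0). split; [|split; [exact HBcomp|split]].
  - intros x z a b Hx Hz Hab. apply Bnu_lcomb; auto.
  - apply Rmax_r.
  - intros y Hy.
    assert (Ht : forall t, 0 < t -> (forall g, Bnu FO TK nu g -> Kabs k (y g) <= t) -> ls_sn E i (u y) <= Rmax Ci 0 * t).
    { intros t Ht Hb.
      set (y' := fun g => Kadd k (Kmul k (KofR k (/ t)) (y g)) (Kmul k (K0 k) (y g))).
      assert (Hy'p : Bnu_polar FO TK nu y').
      { split. apply dual_comb; auto. intros g Hg. unfold y'. rewrite Kmul_0l, Kadd_0, Kabs_mul, Kabs_KofR.
        rewrite Rabs_right by (apply Rle_ge; left; apply Rinv_0_lt_compat; auto).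
        apply Rmult_le_reg_l with t; auto. rewrite <- Rmult_assoc, Rinv_r, Rmult_1_l, Rmult_1_r by lra. auto. }
      pose proof (HCi (u y') (ex_intro _ y' (conj Hy'p eq_refl))) as Hc.
      unfold y' in Hc. rewrite u_lin, lcomb_0r, sn_scal_real in Hc by (auto; apply lcs_full).
      rewrite Rabs_right in Hc by (apply Rle_ge; left; apply Rinv_0_lt_compat; auto).
      pose proof (Rmax_l Ci 0).
      apply Rmult_le_reg_l with (/ t). apply Rinv_0_lt_compat; auto.
      rewrite (Rmult_comm (Rmax Ci 0)), <- Rmult_assoc, Rinv_l, Rmult_1_l by lra. lra. }
    intros s Hs Hb. destruct (Rlt_or_le 0 s) as [Hs0|Hs0]. apply Ht; auto.
    assert (s = 0) by lra. subst s. rewrite Rmult_0_r.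
    pose proof (sn_ge0 i (lcs_full E (u y))). pose proof (Rmax_r Ci 0).
    destruct (Req_dec (ls_sn E i (u y)) 0) as [Z|Z]. lra. exfalso.
    set (c := ls_sn E i (u y)) in *.
    assert (Hc := Ht (c / (Rmax Ci 0 + 1)) ltac:(apply Rdiv_lt_0_compat; lra)).
    assert (c <= Rmax Ci 0 * (c / (Rmax Ci 0 + 1))).
    { apply Hc. intros g Hg. specialize (Hb g Hg). left. apply Rle_lt_trans with 0. auto. apply Rdiv_lt_0_compat; lra. }
    assert (Rmax Ci 0 * (c / (Rmax Ci 0 + 1)) < c).
    { apply Rlt_le_trans with ((Rmax Ci 0 + 1) * (c / (Rmax Ci 0 + 1))).
      apply Rmult_lt_compat_r. apply Rdiv_lt_0_compat; lra. lra. right; field; lra. }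
    lra.
Qed.

Lemma u_in_eps : in_eps E FO u.
Proof. split. intros; apply u_lin; auto. exact u_cont. Qed.

Theorem main_sec : exists F : Om -> E, Feps_nu E FO TK nu F /\ forall x, U x -> TE F x = f x.
Proof.
  exists (Smap E u). split.
  - exists u. split. exact u_in_eps. split. reflexivity. exact polar_bounded.
  - intros x Ux. destruct (Hcons u_in_eps) as [_ H2]. destruct (H2 x) as [Hdx ->].
    apply G_eq. intros e' He. rewrite u_spec by auto. apply (sel_spec He). auto.
Qed.
End Main.

Unset Implicit Arguments.
Set Strict Implicit.

Theorem mainTheorem1
  (k : scalar_field) (Om om : Type) (HOm : inhabited Om) (Hom : inhabited om)
  (E : lcHs k) (HEloc : locally_complete E)
  (G : (E -> K k) -> Prop) (HG : determines_boundedness E G)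
  (FO : lc_subspace (fun_vs Om (Kvs k))) (FOE : lc_subspace (fun_vs Om E))
  (Hcomp : eps_into_compatible E FO FOE)
  (TE : (Om -> E) -> om -> E) (TK : (Om -> K k) -> om -> K k)
  (HTlin : T_linear E FO FOE TE TK)
  (Hcons : consistent E FO FOE TE TK) (Hstrong : strong E FO FOE TE TK)
  (nu : om -> R) (Hnu : forall x, 0 < nu x)
  (HBan : Fnu_Banach FO TK nu)
  (HBcomp : is_compact FO (Bnu FO TK nu))
  (U : om -> Prop) (HU : set_of_uniqueness FO TK nu U) :
  forall f : om -> E, FnuG E FO TK nu G U f ->
    exists F : Om -> E, Feps_nu E FO TK nu F /\ forall x, U x -> TE F x = f x.
Proof. intros f Hf. eapply main_sec; eauto. Qed.
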